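(* Let $C$ be a parity complex. For every $x\in C$, $$x^{++}\cap x^{--}=x^{-+}\cap x^{+-}=\emptyset,$$ $$x^{-\mp}=x^{+\mp}=x^{--}\cap x^{+-},$$ $$x^{-\pm}=x^{+\pm}=x^{-+}\cap x^{++}.$$
   Context: A parity complex consists of a set $C=\bigsqcup_{n\ge 0}C_n$ graded by dimension, together with, for each $n\ge 0$ and each $x\in C_{n+1}$, two disjoint, non-empty, finite subsets $x^-,x^+\subseteq C_n$ (for $x\in C_0$ put $x^-=x^+=\emptyset$), subject to Axioms 1, 2, 3A, 3B below. Notation: for $S\subseteq C$, $S^-=\bigcup_{w\in S}w^-$ and $S^+=\bigcup_{w\in S}w^+$; iterated faces are written $x^{-+}=(x^-)^+$, $x^{++}=(x^+)^+$, etc. Also $S^\mp=S^-\setminus S^+$ and $S^\pm=S^+\setminus S^-$, and $x^{-\mp}=(x^-)^\mp$, $x^{+\pm}=(x^+)^\pm$, etc. For $S,T\subseteq C$ write $S\perp T$ when $S^-\cap T^-=\emptyset$ and $S^+\cap T^+=\emptyset$; for elements, $x\perp y$ means $\{x\}\perp\{y\}$. With $S_n=S\cap C_n$, a set $S\subseteq C$ is well-formed when $S_0$ has at most one element and for every $n>0$ and all $x,y\in S_n$ with $x\ne y$ we have $x\perp y$. Write $x<y$ when $x^+\cap y^-\neq\emptyset$, and let $\lhd$ be the reflexive transitive closure of $<$. Axioms: (1) for all $x$, $x^{++}\cup x^{--}=x^{-+}\cup x^{+-}$; (2) for all $x$, $x^-$ and $x^+$ are well-formed; (3A) $x\lhd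 y$ and $y\lhd x$ imply $x=y$; (3B) if $x\lhd y$ then there is no $z\in C$ with $x\in z^+$ and $y\in z^-$, and no $z\in C$ with $y\in z^+$ and $x\in z^-$. *)

(* Defs.v *)
From mathcomp Require Import all_boot.
From mathcomp Require Import boolp classical_sets cardinality.
From Stdlib Require Import Relations.Relation_Operators.

Set Implicit Arguments. Unset Strict Implicit. Unset Printing Implicit Defensive.
Local Open Scope classical_set_scope.

Section ParityComplex.
Variables (C : Type) (dim : C -> nat) (mi pl : C -> set C).

Definition setm (S : set C) : set C := \bigcup_(w in S) mi w.
Definition setp (S : set C) : set C := \bigcup_(w in S) pl w.
Definition setmp (S : set C) : set C := setm S `\` setp S.
Definition setpm (S : set C) : set C := setp S `\` setm S.

Definition perp (S T : set C) : Prop :=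
  setm S `&` setm T = set0 /\ setp S `&` setp T = set0.

Definition well_formed (S : set C) : Prop :=
  (forall a b, S a -> S b -> dim a = 0 -> dim b = 0 -> a = b) /\
  (forall n x y, 0 < n -> S x -> S y -> dim x = n -> dim y = n -> x <> y ->
     perp [set x] [set y]).

Definition lt_pc (x y : C) : Prop := pl x `&` mi y !=set0.
Definition lhd (x y : C) : Prop := clos_refl_trans C lt_pc x y.

Definition is_parity_complex : Prop :=
  (forall x, dim x = 0 -> mi x = set0 /\ pl x = set0) /\
  (forall x n, dim x = n.+1 ->
     mi x `<=` [set y | dim y = n] /\ pl x `<=` [set y | dim y = n] /\
     mi x `&` pl x = set0 /\ mi x !=set0 /\ pl x !=set0 /\
     finite_set (mi x) /\ finite_set (pl x)) /\
  (forall x, setp (pl x) `|` setm (mi x) = setp (mi x) `|` setm (pl x)) /\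
  (forall x, well_formed (mi x) /\ well_formed (pl x)) /\
  (forall x y, lhd x y -> lhd y x -> x = y) /\
  (forall x y, lhd x y ->
     (~ exists z, pl z x /\ mi z y) /\ (~ exists z, pl z y /\ mi z x)).

End ParityComplex.

(* Main.v *)
Require Import Defs.
From mathcomp Require Import all_boot.
From mathcomp Require Import boolp classical_sets cardinality.
From Stdlib Require Import Relations.Relation_Operators.
Local Open Scope classical_set_scope.

Lemma four_sets (T : Type) (A B D E : set T) :
  A `&` B = set0 -> D `&` E = set0 -> A `|` B = D `|` E ->
  B `\` D = E `\` A /\ E `\` A = B `&` E /\
  D `\` B = A `\` E /\ A `\` E = D `&` A.
Proof.
move=> hAB hDE hU.
have nAB : forall y, A y -> B y -> False.
  by move=> y a b; have := congr1 (fun S => S y) hAB; rewrite /= => <-; split.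
have nDE : forall y, D y -> E y -> False.
  by move=> y a b; have := congr1 (fun S => S y) hDE; rewrite /= => <-; split.
have U : forall y, (A y \/ B y) <-> (D y \/ E y).
  by move=> y; have := congr1 (fun S => S y) hU; rewrite /= => ->.
have e1 : B `\` D = B `&` E.
  apply/seteqP; split => y /=.
  - move=> [b nd]; split => //; have [] := (proj1 (U y) (or_intror b)) => //.
  - move=> [b e]; split => //; move=> d; exact: nDE d e.
have e2 : E `\` A = B `&` E.
  apply/seteqP; split => y /=.
  - move=> [e na]; split => //; have [] := (proj2 (U y) (or_intror e)) => //.
  - move=> [b e]; split => //; move=> a; exact: nAB a b.
have e3 : D `\` B = D `&` A.
  apply/seteqP; split => y /=.
  - move=> [d nb]; split => //; have [] := (proj2 (U y) (or_introl d)) => //.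
  - move=> [d a]; split => //; move=> b; exact: nAB a b.
have e4 : A `\` E = D `&` A.
  apply/seteqP; split => y /=.
  - move=> [a ne]; split => //; have [] := (proj1 (U y) (or_introl a)) => //.
  - move=> [d a]; split => //; move=> e; exact: nDE d e.
by rewrite e1 e2 e3 e4.
Qed.

Theorem proposition1p1 (C : Type) (dim : C -> nat) (mi pl : C -> set C)
  (HC : is_parity_complex dim mi pl) (x : C) :
  (* x^{++} ∩ x^{--} = ∅ and x^{-+} ∩ x^{+-} = ∅ *)
  setp pl (pl x) `&` setm mi (mi x) = set0 /\
  setp pl (mi x) `&` setm mi (pl x) = set0 /\
  (* x^{-∓} = x^{+∓} = x^{--} ∩ x^{+-} *)
  setmp mi pl (mi x) = setmp mi pl (pl x) /\
  setmp mi pl (pl x) = setm mi (mi x) `&` setm mi (pl x) /\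
  (* x^{-±} = x^{+±} = x^{-+} ∩ x^{++} *)
  setpm mi pl (mi x) = setpm mi pl (pl x) /\
  setpm mi pl (pl x) = setp pl (mi x) `&` setp pl (pl x).
Proof.
case: HC => _ [_ [Ax1 [_ [_ Ax3B]]]].
have h1 : setp pl (pl x) `&` setm mi (mi x) = set0.
  apply/seteqP; split => y //= [[u ux uy] [v vx vy]].
  have l : lhd mi pl u v by apply: rt_step; exists y.
  by apply: (proj1 (Ax3B _ _ l)); exists x.
have h2 : setp pl (mi x) `&` setm mi (pl x) = set0.
  apply/seteqP; split => y //= [[u ux uy] [v vx vy]].
  have l : lhd mi pl u v by apply: rt_step; exists y.
  by apply: (proj2 (Ax3B _ _ l)); exists x.
have [e1 [e2 [e3 e4]]] := @four_sets _ _ _ _ _ h1 h2 (Ax1 x).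
rewrite /setmp /setpm.
split; first exact h1. split; first exact h2.
split; first by rewrite e1 e2.
split; first by rewrite e2.
split; first by rewrite e3 e4.
by rewrite e4 setIC.
Qed.
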